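(* Let $X$ be a Hausdorff locally compact space and $\sigma\colon\mathrm{Dom}(\sigma)\to\mathrm{Ran}(\sigma)$ a local homeomorphism between open subsets of $X$, with Deaconu–Renault groupoid $\mathcal{G}_\sigma$. Then $A(\sigma)$ and $P_0(\sigma)$ are $\mathcal{G}_\sigma$-invariant subsets of $X$, and $A(\sigma)\cup P_0(\sigma)$ equals the set of points $x\in X$ such that $\mathrm{Iso}((\mathcal{G}_\sigma)_{\overline{[x]}})^\circ_x=(\mathcal{G}_\sigma)^x_x$.
   Context: $\sigma^0=\mathrm{id}_X$ and $\sigma^n$ is the $n$-fold composition with natural domain $\mathrm{Dom}(\sigma^n)$. $\mathcal{G}_\sigma=\{(x,m-n,y): m,n\ge0,\ x\in\mathrm{Dom}(\sigma^m),\ y\in\mathrm{Dom}(\sigma^n),\ \sigma^m(x)=\sigma^n(y)\}$ with $r(x,p,y)=x$, $s(x,p,y)=y$, $(x,p,y)(y,q,w)=(x,p+q,w)$, unit space $X$, topology with basis $Z(U,m,n,V)=\{(x,m-n,y): x\in U\cap\mathrm{Dom}(\sigma^m),\ y\in V\cap\mathrm{Dom}(\sigma^n),\ \sigma^m(x)=\sigma^n(y)\}$. The orbit $[x]$ is $\{y:\sigma^m(y)=\sigma^n(x)\text{ for some }m,n\ge0\}$. $A(\sigma)$ is the set of aperiodic points (no $l\ge0,p\ge1$ with $\sigma^{l+p}(x)=\sigma^l(x)$); $P_0(\sigma)$ is the set of periodic points $x$ that are isolated points of $[x]$ (relative topology). For closed invariant $Y\subset X$, $(\mathcal{G}_\sigma)_Y=s^{-1}(Y)$,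 and $\mathrm{Iso}((\mathcal{G}_\sigma)_{\overline{[x]}})^\circ_x$ is the intersection with $(\mathcal{G}_\sigma)^x_x$ of the interior in $(\mathcal{G}_\sigma)_{\overline{[x]}}$ of its isotropy bundle $\{g: s(g)=r(g)\}$. *)

(* Defs.v *)
From HB Require Import structures.
From mathcomp Require Import all_boot all_order all_algebra.
From mathcomp Require Import all_classical all_reals all_analysis.
Set Implicit Arguments. Unset Strict Implicit. Unset Printing Implicit Defensive.
Import Order.TTheory GRing.Theory Num.Theory.
Local Open Scope classical_set_scope.

Section DR.
Context {X : topologicalType} (Dom : set X) (sigma : X -> X).

Definition domn (n : nat) : set X :=
  [set x | forall k : nat, (k < n)%N -> Dom (iter k sigma x)].

Definition sigman (n : nat) (x : X) : X := iter n sigma x.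

Definition local_homeo_between_open : Prop :=
  open Dom /\ open (sigma @` Dom) /\
  forall x, Dom x -> exists U : set X,
    [/\ open U, U x, U `<=` Dom, open (sigma @` U) &
        ({within U, continuous sigma} /\
        {in U &, injective sigma} /\
        exists g : X -> X,
          [/\ {in U, forall y, g (sigma y) = y},
              {in sigma @` U, forall z, sigma (g z) = z},
              g @` (sigma @` U) `<=` U &
              {within sigma @` U, continuous g}])].

(* the Deaconu--Renault groupoid: elements are triples (x, p, y) *)
Definition inG (g : X * int * X) : Prop :=
  exists m n : nat, [/\ g.1.2 = (m%:Z - n%:Z)%R, domn m g.1.1, domn n g.2 &
                        sigman m g.1.1 = sigman n g.2].

Definition rng (g : X * int * X) : X := g.1.1.
Definition src (g : X * int * X) : X := g.2.

Definition Zset (U : set X) (m n : nat) (V : set X) : set (X * int * X) :=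
  [set g | [/\ g.1.2 = (m%:Z - n%:Z)%R, U g.1.1, domn m g.1.1, V g.2 &
               (domn n g.2 /\ sigman m g.1.1 = sigman n g.2)]].

Definition openG (O : set (X * int * X)) : Prop :=
  O `<=` inG /\
  forall g, O g -> exists U m n V,
      [/\ open U, open V, Zset U m n V g & Zset U m n V `<=` O].

Definition reduction (Y : set X) : set (X * int * X) :=
  [set g | inG g /\ Y (src g)].

Definition rel_interiorG (B A : set (X * int * X)) : set (X * int * X) :=
  [set g | B g /\ exists O, [/\ openG O, O g & O `&` B `<=` A]].

Definition isotropy (B : set (X * int * X)) : set (X * int * X) :=
  [set g | B g /\ src g = rng g].

Definition isoG_at (x : X) : set (X * int * X) :=
  [set g | inG g /\ rng g = x /\ src g = x].

Definition orbit (x : X) : set X :=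
  [set y | exists m n : nat, [/\ domn m y, domn n x & sigman m y = sigman n x]].

Definition int_iso_at (x : X) : set (X * int * X) :=
  rel_interiorG (reduction (closure (orbit x)))
                (isotropy (reduction (closure (orbit x)))) `&` isoG_at x.

Definition aperiodic : set X :=
  [set x | ~ exists l p : nat, [/\ (1 <= p)%N, domn (l + p) x &
                                   sigman (l + p) x = sigman l x]].

Definition P0 : set X :=
  [set x | ~ aperiodic x /\
           exists U : set X, [/\ open U, U x & U `&` orbit x = [set x]]].

Definition G_invariant (A : set X) : Prop :=
  forall g, inG g -> A (src g) -> A (rng g).

End DR.

(* Main.v *)
Require Import Defs.
From HB Require Import structures.
From mathcomp Require Import all_boot all_order all_algebra.
From mathcomp Require Import all_classical all_reals all_analysis.
From mathcomp Require Import zify.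
Local Open Scope classical_set_scope.

Section H.
Variables (X : topologicalType) (Dom : set X) (sigma : X -> X).
Local Notation dn := (domn Dom sigma).
Local Notation sn := (sigman sigma).

Lemma sn0 x : sn 0 x = x. Proof. by []. Qed.
Lemma snD i k x : sn (i + k) x = sn i (sn k x).
Proof. by rewrite /sigman iterD. Qed.

Lemma dnD k i y : dn (k + i) y <-> dn i y /\ dn k (sn i y).
Proof.
split.
- move=> h; split=> j hj; first by apply: h; lia.
  rewrite /sigman -iterD; apply: h; lia.
- move=> [h1 h2] j hj; case: (ltnP j i) => hji; first exact: h1.
  have -> : j = (j - i) + i by rewrite subnK.
  rewrite iterD; apply: h2; lia.
Qed.
Lemma dn0 x : dn 0 x. Proof. by []. Qed.
Lemma dnS n y : dn n.+1 y <-> dn n y /\ Dom (sn n y).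
Proof.
split.
- move=> h; split; [move=> j hj; apply: h; exact: ltnW | apply: h; done]. 
- move=> [h1 h2] j; rewrite ltnS leq_eqVlt => /orP [/eqP -> //|]; exact: h1.
Qed.
Lemma dn_le m n y : (m <= n)%N -> dn n y -> dn m y.
Proof. by move=> hmn h j hj; apply: h; apply: leq_trans hmn. Qed.

Definition R y a := exists i j, [/\ dn i y, dn j a & sn i y = sn j a].

Lemma R_trans y a b : R y a -> R a b -> R y b.
Proof.
move=> [i [j [hy ha e1]]] [m [n [ha' hb e2]]].
case: (leqP j m) => hjm.
- have em : m = (m - j) + j by rewrite subnK.
  exists ((m - j) + i), n; split=> //.
  + apply/dnD; split=> //; rewrite e1. have : dn ((m - j) + j) a by rewrite -em.
    by case/dnD.
  + by rewrite snD e1 -snD -em.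
- have ej : j = (j - m) + m by rewrite subnK // ltnW.
  exists i, ((j - m) + n); split=> //.
  + apply/dnD; split=> //; rewrite -e2. have : dn ((j - m) + m) a by rewrite -ej.
    by case/dnD.
  + by rewrite snD -e2 -snD -ej.
Qed.
Arguments R_trans {y a b}.
Lemma R_sym y a : R y a -> R a y.
Proof. by move=> [i [j [? ? ?]]]; exists j, i. Qed.
Arguments R_sym {y a}.
Lemma R_refl y : R y y.
Proof. by exists 0, 0. Qed.
Lemma orbitE x y : Defs.orbit Dom sigma x y <-> R y x.
Proof. by []. Qed.

Lemma per_vals x l p : (1 <= p)%N -> sn (l + p) x = sn l x ->
  forall k, exists2 i, (i < l + p)%N & sn k x = sn i x.
Proof.
move=> hp he k; elim/ltn_ind: k => k IH.
case: (ltnP k (l + p)) => hk; first by exists k.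
have ek : k = (k - (l + p)) + (l + p) by rewrite subnK.
have [i hi e] : exists2 i, (i < l + p)%N & sn (k - p) x = sn i x.
  apply: IH; 
  lia.
exists i => //; rewrite -e {1}ek snD he -snD; congr sn; lia.
Qed.

Lemma per_dom x l p : (1 <= p)%N -> dn (l + p) x -> sn (l + p) x = sn l x ->
  forall k, dn k x.
Proof.
move=> hp hd he k j _; have [i hi e] := per_vals x l p hp he j; move: e; rewrite /sigman => ->; exact: hd.
Qed.

Definition EP x := exists l p, [/\ (1 <= p)%N, dn (l + p) x & sn (l + p) x = sn l x].

Lemma aperE x : aperiodic Dom sigma x <-> ~ EP x.
Proof. by []. Qed.

Lemma EP_R a b : R b a -> EP a -> EP b.
Proof.
move=> [n [m [hb ha e]]] [l [p [hp hd he]]].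
have dall := per_dom a l p hp hd he.
have db : forall k, dn k b.
  move=> k; case: (leqP k n) => hk; first exact: dn_le hb.
  have -> : k = (k - n) + n by rewrite subnK // ltnW.
  apply/dnD; split=> //; rewrite e.
  by have /dnD [] := dall ((k - n) + m).
exists (l + n), p; split=> //.
have -> : l + n + p = (l + p) + n by lia.
rewrite !snD e -!snD; have -> : l + p + m = m + (l + p) by lia.
by rewrite snD he -snD addnC.
Qed.
Arguments EP_R {a b}.

Definition Cat (f : X -> X) x := forall B, nbhs (f x) B -> nbhs x (f @^-1` B).

Lemma Cat_of f x : {for x, continuous f} -> Cat f x.
Proof. by move=> h B hB; exact: h B hB. Qed.

Lemma Cat_comp f g x : Cat f x -> Cat g (f x) -> Cat (g \o f) x.
Proof. by move=> hf hg B hB; exact: (hf _ (hg B hB)). Qed.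

Arguments Cat_comp {f g x}.
Arguments Cat_of {f x}.
Lemma nbhs_open (A : set X) x : open A -> A x -> nbhs x A.
Proof. by move=> oA Ax; apply: open_nbhs_nbhs; split. Qed.

Lemma openP (A : set X) : (forall x, A x -> nbhs x A) -> open A.
Proof. by move=> h; rewrite openE => x /h. Qed.

Hypothesis LH : local_homeo_between_open Dom sigma.
Arguments nbhs_open {A x}.

Lemma sig_cont x : Dom x -> Cat sigma x.
Proof.
move=> Dx; have [_ [_ /(_ x Dx) [U [oU Ux _ _ [cU _]]]]] := LH.
apply: Cat_of; move: cU; rewrite continuous_open_subspace // => h.
by apply: h; rewrite in_setE.
Qed.
Arguments sig_cont {x}.

Lemma sn_cont n x : dn n x -> Cat (sn n) x.
Proof.
elim: n x => [|n IH] x.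
  by move=> _ B hB; apply: filterS hB.
move=> /dnS [hx hD].
have := Cat_comp (IH x hx) (sig_cont hD).
by move=> h B hB; apply: filterS (h B hB) => y; rewrite /= /sigman.
Qed.
Arguments sn_cont {n x}.

Lemma dn_open n : open (dn n).
Proof.
elim: n => [|n IH].
  by apply: openP => x _; apply: filterS filterT => y _ j.
apply: openP => x /dnS [hx hD].
have h1 := nbhs_open IH hx.
have h2 := sn_cont hx _ (nbhs_open (proj1 LH) hD).
apply: filterS (filterI h1 h2) => y [hy1 hy2]; exact/dnS.
Qed.

Lemma sig_openmap x : Dom x -> exists U, [/\ open U, U x, U `<=` Dom,
  {in U &, injective sigma} & forall W, open W -> W `<=` U -> open (sigma @` W)].
Proof.
move=> Dx; have [_ [_ /(_ x Dx) [U [oU Ux sUD oSU [_ [iU [g [gK sK gU cg]]]]]]]] := LH.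
exists U; split=> // W oW sWU; apply: openP => z [w Ww <-].
have cgz : Cat g (sigma w).
  apply: Cat_of; move: cg; rewrite continuous_open_subspace // => h.
  by apply: h; rewrite in_setE; exists w => //; exact: sWU.
have h1 := nbhs_open oSU (ex_intro2 _ _ w (sWU w Ww) erefl).
have : nbhs (g (sigma w)) W by rewrite gK ?in_setE; [exact: nbhs_open | exact: sWU].
move=> /cgz h2; apply: filterS (filterI h1 h2) => z' [hz1 hz2].
by exists (g z') => //; rewrite sK // in_setE.
Qed.
Arguments sig_openmap {x}.

Lemma sn_openmap n x : dn n x -> exists U, [/\ open U, U x, U `<=` dn n,
  {in U &, injective (sn n)} & forall W, open W -> W `<=` U -> open (sn n @` W)].
Proof.
elim: n x => [|n IH] x.
  move=> _; exists setT; split.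
  - exact: openT.
  - by [].
  - by move=> u _ j.
  - by move=> ? ? ? ? ; rewrite /sigman.
  - move=> W oW _; suff -> : sn 0 @` W = W by [].
    by apply/seteqP; split=> [z [w hw <-]//|z hz]; exists z.
move=> /dnS [hx hD].
have [U1 [oU1 U1x sU1 iU1 mU1]] := IH x hx.
have [V [oV Vx sVD iV mV]] := sig_openmap hD.
exists (U1 `&` (sn n @^-1` V)); split.
- apply: openP => u [u1 uV].
  have h1 := nbhs_open oU1 u1.
  have h2 := sn_cont (sU1 u u1) _ (nbhs_open oV uV).
  exact: filterI h1 h2.
- by split.
- by move=> u [u1 uV]; apply/dnS; split; [exact: sU1 | exact: sVD].
- move=> u v; rewrite !in_setE => -[u1 uV] [v1 vV].
  rewrite /sigman !iterS => e.
  apply: iU1; rewrite ?in_setE //; apply: iV; rewrite ?in_setE //.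
- move=> W oW sW.
  have -> : sn n.+1 @` W = sigma @` (sn n @` W).
    apply/seteqP; split=> [z [w hw <-]|z [y [w hw <-] <-]].
      by exists (sn n w); [exists w | rewrite /sigman iterS].
    by exists w => //; rewrite /sigman iterS.
  apply: mV; first by apply: mU1 => // w /sW [].
  by move=> z [w /sW [_ ?] <-].
Qed.
Arguments sn_openmap {n x}.

Lemma sep (H : hausdorff_space X) c (f : nat -> X) N :
  exists Q, [/\ open Q, Q c & forall i, (i < N)%N -> f i <> c -> ~ Q (f i)].
Proof.
elim: N => [|N [Q [oQ Qc hQ]]].
  by exists setT; split=> //; exact: openT.
case: (pselect (f N = c)) => hfN.
  exists Q; split=> // i; rewrite ltnS leq_eqVlt => /orP [/eqP -> //|]; exact: hQ.
have /eqP hne : c <> f N by move=> e; apply: hfN.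
have [A [oA cA fA]] := hausdorff_accessible H hne.
exists (Q `&` A); split; first exact: openI.
  by split=> //; rewrite -in_setE.
move=> i; rewrite ltnS leq_eqVlt => /orP [/eqP ->|hi] hf [q a].
  by move: fA; rewrite in_setE => /(_ a).
exact: hQ hi hf q.
Qed.

Lemma Zset_inG U m n V : Zset Dom sigma U m n V `<=` inG Dom sigma.
Proof. by move=> g [e _ dm _ [dn' eq]]; exists m, n; split. Qed.

Lemma Zset_open U m n V : open U -> open V -> openG Dom sigma (Zset Dom sigma U m n V).
Proof.
move=> oU oV; split; first exact: Zset_inG.
by move=> g hg; exists U, m, n, V; split.
Qed.

Lemma iter_pow p z t : sn p z = z -> sn (p * t) z = z.
Proof.
move=> h; elim: t => [|t IH]; first by rewrite muln0.
by rewrite mulnS snD IH.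
Qed.

Lemma main (H : hausdorff_space X) :
  [/\ G_invariant Dom sigma (aperiodic Dom sigma),
      G_invariant Dom sigma (P0 Dom sigma) &
      aperiodic Dom sigma `|` P0 Dom sigma =
      [set x | int_iso_at Dom sigma x = isoG_at Dom sigma x]].
Proof.
have RG : forall g, inG Dom sigma g -> R (rng g) (src g).
  by move=> g [m [n [_ hm hn e]]]; exists m, n.
split.
- move=> g /RG hR hap hEP; apply: hap; apply: EP_R hEP; exact: R_sym.
- move=> [[a k] b] /RG; rewrite /rng /src /= => hR [hnap [U [oU Ub hU]]]; split.
    move=> hap; apply: hnap => hEP; apply: hap; exact: EP_R hR hEP.
  have [m [n [ha hb e]]] := hR.
  have [U2 [oU2 U2b sU2 iU2 mU2]] := sn_openmap hb.
  have [U1 [oU1 U1a sU1 iU1 mU1]] := sn_openmap ha.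
  set S := sigman sigma n @` (U `&` U2).
  have oS : open S by apply: mU2; [exact: openI | by move=> ? []].
  exists (U1 `&` (sigman sigma m @^-1` S)); split.
  + apply: openP => u [u1 uS].
    exact: filterI (nbhs_open oU1 u1) (sn_cont (sU1 u u1) _ (nbhs_open oS uS)).
  + split=> //; rewrite /= e; by exists b.
  + apply/seteqP; split => [y [[y1 yS] hy]|y ->]; last first.
      by split; [split=> //; rewrite /= e; exists b | exact: R_refl].
    have [v [vU vU2] ev] := yS.
    have hvy : R v y by exists n, m; split=> //; [exact: sU2 | exact: sU1].
    have hvb : R v b := R_trans (R_trans hvy hy) hR.
    have : (U `&` Defs.orbit Dom sigma b) v by split.
    rewrite hU => /= hvb'; move: ev; rewrite hvb' -e => ev.
    by apply: iU1; rewrite ?in_setE.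
apply/seteqP; split => x.
-
  move=> hx; apply/seteqP; split=> [g [_ //]|[[a k] b] hg].
  have hg' := hg; move: hg' => [hG [ha hb]]; rewrite /rng /src /= in ha hb.
  subst a b.
  have hB : reduction Dom sigma (closure (Defs.orbit Dom sigma x)) (x, k, x).
    by split=> //; apply: subset_closure; exact: R_refl.
  split=> //; split=> //.
  have [m [n [/= ek dm dn' e]]] := hG.
  case: hx => [hap|[_ [U [oU Ux hU]]]].
  + have emn : m = n.
      case: (ltngtP m n) => // hmn; exfalso; apply: hap.
        exists m, (n - m); split; [by rewrite subn_gt0|by rewrite subnKC // ltnW|].
        by rewrite subnKC ?e // ltnW.
      exists n, (m - n); split; [by rewrite subn_gt0|by rewrite subnKC // ltnW|].
      by rewrite subnKC ?e // ltnW.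
    subst n.
    exists (Zset Dom sigma setT 0 0 setT); split.
    * exact: Zset_open openT openT.
    * by split=> //=; lia.
    * move=> [[a k'] b] [[_ _ _ _ [_ /= eab]] hB']; split=> //.
  + exists (Zset Dom sigma U m n U); split.
    * exact: Zset_open.
    * by split.
    * move=> [[a k'] b] [hZ hB']; split=> //.
      move: hZ hB' => [/= _ Ua dma Ub [dnb eab]] [_ hcl].
      rewrite /src /rng /= in hcl *.
      have bx : b = x.
        case: (pselect (b = x)) => // hbx; exfalso.
        have /eqP hne : b <> x by [].
        have [A [oA bA xA]] := hausdorff_accessible H hne.
        rewrite in_setE in bA; rewrite in_setE in xA.
        have [w [hw [wA wU]]] := hcl _ (filterI (nbhs_open oA bA) (nbhs_open oU Ub)).
        have : (U `&` Defs.orbit Dom sigma x) w by split.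
        by rewrite hU => /= wx; apply: xA; rewrite -wx.
      subst b.
      have : (U `&` Defs.orbit Dom sigma x) a by split=> //; exists m, n.
      by rewrite hU.
-
  move=> /= hx.
  case: (pselect (EP x)) => hEP; last by left.
  right; split; first by move=> hap; apply: hap.
  have [l [p [hp hd he]]] := hEP.
  have hg0 : isoG_at Dom sigma x (x, (Posz p), x).
    split=> //; exists (l + p), l; split=> //=; [lia | exact: dn_le l (l + p) x (leq_addr _ _) hd].
  rewrite -hx in hg0; case: hg0 => [[_ [ O [[_ oO] Og0 hsub]]] _].
  have [U [m' [n' [V [oU oV [/= ep Ux dmx Vx [dnx ex]] sZO]]]]] := oO _ Og0.
  have em : m' = p + n' by lia.
  have [U1 [oU1 U1x sU1 iU1 mU1]] := sn_openmap dmx.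
  have [U3 [oU3 U3x sU3 iU3 mU3]] := sn_openmap dnx.
  set S := sigman sigma m' @` (U `&` U1).
  have oS : open S by apply: mU1; [exact: openI | by move=> ? []].
  have [Q [oQ Qx hQ]] := sep H (sigman sigma n' x) (fun i => sigman sigma i x) (l + p).
  set Wset := [set u | [/\ V u, U3 u, S (sigman sigma n' u) & Q (sigman sigma n' u)]].
  exists (interior Wset); split; first exact: open_interior.
    have hSQ : nbhs (sigman sigma n' x) (S `&` Q).
      apply: nbhs_open; first exact: openI.
      by split=> //; rewrite /S -ex; exists x.
    have h3 := sn_cont dnx _ hSQ.
    suff : nbhs x Wset by [].
    apply: filterS (filterI (filterI (nbhs_open oV Vx) (nbhs_open oU3 U3x)) h3).
    by move=> u [[? ?] [? ?]]; split.
  apply/seteqP; split => [y [/interior_subset [Vy U3y Sy Qy] hy]|y ->]; last first.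
    split; last exact: R_refl.
    have hSQ : nbhs (sigman sigma n' x) (S `&` Q).
      apply: nbhs_open; first exact: openI.
      by split=> //; rewrite /S -ex; exists x.
    have h3 := sn_cont dnx _ hSQ.
    suff : nbhs x Wset by [].
    apply: filterS (filterI (filterI (nbhs_open oV Vx) (nbhs_open oU3 U3x)) h3).
    by move=> u [[? ?] [? ?]]; split.
  have [a [aU aU1] ea] := Sy.
  have hZ : Zset Dom sigma U m' n' V (a, (Posz p), y).
    by split=> //=; [exact: sU1 | split=> //; exact: sU3].
  have hB : reduction Dom sigma (closure (Defs.orbit Dom sigma x)) (a, (Posz p), y).
    by split; [exact: Zset_inG hZ | apply: subset_closure].
  have [_ /= ya] := hsub _ (conj (sZO _ hZ) hB).
  rewrite /src /rng /= in ya; subst a.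
  set z := sigman sigma n' y.
  have zp : sigman sigma p z = z by rewrite /z -snD -em.
  have [i [j [_ _ eij]]] := hy.
  have zJ : z = sigman sigma ((p * i + n' - i) + j) x.
    rewrite -(iter_pow p z i zp) /z -snD.
    have -> : p * i + n' = (p * i + n' - i) + i.
      rewrite subnK //; apply: leq_trans (leq_addr _ _); exact: leq_pmull.
    by rewrite snD eij -snD; congr sn; lia.
  have [i0 hi0 ei0] := per_vals x l p hp he (p * i + n' - i + j).
  have : z = sigman sigma n' x.
    case: (pselect (sigman sigma i0 x = sigman sigma n' x)) => hne.
      by rewrite zJ ei0.
    by exfalso; apply: (hQ i0 hi0 hne); rewrite -ei0 -zJ.
  by move=> ezx; apply: iU3; rewrite ?in_setE.
Qed.
End H.


Theorem lemma4p2 (X : topologicalType) (Dom : set X) (sigma : X -> X) :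
  hausdorff_space X -> locally_compact [set: X] ->
  local_homeo_between_open Dom sigma ->
  [/\ G_invariant Dom sigma (aperiodic Dom sigma),
      G_invariant Dom sigma (P0 Dom sigma) &
      aperiodic Dom sigma `|` P0 Dom sigma =
      [set x | int_iso_at Dom sigma x = isoG_at Dom sigma x]].
Proof. by move=> H _ LH; exact: main LH H. Qed.
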